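(* Consider the graded cluster algebra $\mathcal{A}\big((x_1,x_2,x_3),B,(1,1,2)\big)$ with $B=\begin{pmatrix}0&2&-1\\-2&0&1\\1&-1&0\end{pmatrix}$. It is of mixed type: the occurring degrees are exactly $\pm1$ and $\pm2$; there is exactly one cluster variable of degree $2$ and exactly one of degree $-2$, and there are infinitely many cluster variables of degree $1$ and infinitely many of degree $-1$. Moreover the grading is balanced.
   Context: Graded cluster algebras: for a $3\times3$ skew-symmetric integer matrix $B=(b_{ij})$ and $k\in\{1,2,3\}$, $\mu_k(B)=(b'_{ij})$ with $b'_{ij}=-b_{ij}$ if $i=k$ or $j=k$ and $b'_{ij}=b_{ij}+\operatorname{sgn}(b_{ik})\max(b_{ik}b_{kj},0)$ otherwise. A seed $((x_1,x_2,x_3),B)$ mutates in direction $k$ to $(x',\mu_k B)$ with $x'_j=x_j$ ($j\ne k$) and $x'_k=\big(\prod_{b_{ik}>0}x_i^{b_{ik}}+\prod_{b_{ik}<0}x_i^{-b_{ik}}\big)/x_k$. Cluster variables are all entries of clusters reachable by iterated mutation; $\mathcal{A}(x,B,g)$ is the algebra they generate, graded by $\deg x_i=g_i$ where $Bg=0$; under mutation at $k$ the degree vector becomes $g'$ with $g'_j=g_j$ ($j\neq k$), $g'_k=-g_k+\sum_{b_{ik}>0}b_{ik}g_i$, and every cluster variable is homogeneous. A degree occurs if some cluster variable has it. Mixed type means some occurring degrees contain finitely many cluster variables and others infinitely many. The grading is balanced if for every $d$ there is a bijection between the cluster variables of degree $d$ and those of degree $-d$. *)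

(* Defs.v *)
From HB Require Import structures.
From mathcomp Require Import all_boot all_order all_algebra.
From mathcomp Require Import fraction.
From mathcomp Require Import mpoly.
Set Implicit Arguments. Unset Strict Implicit. Unset Printing Implicit Defensive.
Import Order.TTheory GRing.Theory Num.Theory.
Local Open Scope ring_scope.

Definition KF : fieldType := {fraction {mpoly rat[3]}}.

Definition xinit : 'I_3 -> KF := fun i => (tofrac ('X_i : {mpoly rat[3]})).

(* A graded seed: cluster, exchange matrix, degree vector. *)
Record gseed := GSeed {
  sx : 'I_3 -> KF;
  sB : 'M[int]_3;
  sg : 'I_3 -> int }.

Definition mutB (k : 'I_3) (B : 'M[int]_3) : 'M[int]_3 :=
  \matrix_(i < 3, j < 3)
    if (i == k) || (j == k) then - B i j
    else B i j + Num.sg (B i k) * Num.max (B i k * B k j) 0.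

Definition mutx (k : 'I_3) (B : 'M[int]_3) (x : 'I_3 -> KF) : 'I_3 -> KF :=
  fun j => if j == k then
     ((\prod_(i < 3 | 0 < B i k) x i ^+ `|B i k|%N)
      + (\prod_(i < 3 | B i k < 0) x i ^+ `|B i k|%N)) / x k
   else x j.

Definition mutg (k : 'I_3) (B : 'M[int]_3) (g : 'I_3 -> int) : 'I_3 -> int :=
  fun j => if j == k then
     - g k + \sum_(i < 3 | 0 < B i k) B i k * g i
   else g j.

Definition mutate (k : 'I_3) (s : gseed) : gseed :=
  GSeed (mutx k (sB s) (sx s)) (mutB k (sB s)) (mutg k (sB s) (sg s)).

Definition mutseq (ks : seq 'I_3) (s : gseed) : gseed :=
  foldl (fun t k => mutate k t) s ks.

Definition reachable (s0 s : gseed) : Prop := exists ks, s = mutseq ks s0.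

Definition cv_deg (s0 : gseed) (d : int) (v : KF) : Prop :=
  exists s i, reachable s0 s /\ sx s i = v /\ sg s i = d.

Definition degree_occurs (s0 : gseed) (d : int) : Prop := exists v, cv_deg s0 d v.

Definition finitely_many (s0 : gseed) (d : int) : Prop :=
  exists l : seq KF, forall v, cv_deg s0 d v -> v \in l.

Definition mixed_type (s0 : gseed) : Prop :=
  (exists d, degree_occurs s0 d /\ finitely_many s0 d) /\
  (exists d, degree_occurs s0 d /\ ~ finitely_many s0 d).

Definition balanced (s0 : gseed) : Prop :=
  forall d : int, exists f : {v | cv_deg s0 d v} -> {v | cv_deg s0 (- d) v},
    bijective f.

Definition B0 : 'M[int]_3 :=
  \matrix_(i < 3, j < 3)
    nth 0 (nth [::] [:: [:: 0; 2; -1]; [:: -2; 0; 1]; [:: 1; -1; 0]] i) j.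

Definition g0 : 'I_3 -> int := fun i => nth 0 [:: 1; 1; 2] i.

Definition seed0 : gseed := GSeed xinit B0 g0.

(* Main.v *)
Require Import Defs.
From HB Require Import structures.
From mathcomp Require Import all_boot all_order all_algebra.
From mathcomp Require Import fraction mpoly.
From mathcomp Require Import ring lra.
From Stdlib Require Import Classical ProofIrrelevance.
Import Order.TTheory GRing.Theory Num.Theory.
Local Open Scope ring_scope.

Definition o0 : 'I_3 := @Ordinal 3 0 isT.
Definition o1 : 'I_3 := @Ordinal 3 1 isT.
Definition o2 : 'I_3 := @Ordinal 3 2 isT.

Lemma ord3P (P : 'I_3 -> Prop) : P o0 -> P o1 -> P o2 -> forall i, P i.
Proof.
move=> h0 h1 h2 [[|[|[|//]]] Hi].
- by rewrite (_ : Ordinal Hi = o0) //; apply: val_inj.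
- by rewrite (_ : Ordinal Hi = o1) //; apply: val_inj.
- by rewrite (_ : Ordinal Hi = o2) //; apply: val_inj.
Qed.

Definition M (b : seq (seq int)) : 'M[int]_3 :=
  \matrix_(i < 3, j < 3) nth 0 (nth [::] b i) j.

Definition ent (b : seq (seq int)) (i j : nat) : int := nth 0 (nth [::] b i) j.

Definition mutBl (k : nat) (b : seq (seq int)) : seq (seq int) :=
  [seq [seq (if (i == k) || (j == k) then - ent b i j
             else ent b i j + Num.sg (ent b i k) * Num.max (ent b i k * ent b k j) 0)
        | j <- iota 0 3] | i <- iota 0 3].

Lemma mutB_M (k : 'I_3) b : mutB k (M b) = M (mutBl k b).
Proof.
apply/matrixP => i j; rewrite !mxE /mutBl.
rewrite (nth_map 0%N); last by rewrite size_iota.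
rewrite (nth_map 0%N); last by rewrite size_iota.
by rewrite !nth_iota //= !add0n.
Qed.

Lemma prod3 (F : 'I_3 -> KF) (P : pred 'I_3) :
  \prod_(i < 3 | P i) F i =
  (if P o0 then F o0 else 1) * (if P o1 then F o1 else 1) * (if P o2 then F o2 else 1).
Proof.
rewrite big_mkcond !big_ord_recl big_ord0 /= mulr1 mulrA.
have E2 : (lift ord0 (lift ord0 ord0) : 'I_3) = o2 by apply: val_inj.
have E1 : (lift ord0 ord0 : 'I_3) = o1 by apply: val_inj.
have E0 : (ord0 : 'I_3) = o0 by apply: val_inj.
by rewrite E2 E1 E0.
Qed.

Lemma sum3 (F : 'I_3 -> int) (P : pred 'I_3) :
  \sum_(i < 3 | P i) F i =
  (if P o0 then F o0 else 0) + (if P o1 then F o1 else 0) + (if P o2 then F o2 else 0).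
Proof.
rewrite big_mkcond !big_ord_recl big_ord0 /= addr0 addrA.
have E2 : (lift ord0 (lift ord0 ord0) : 'I_3) = o2 by apply: val_inj.
have E1 : (lift ord0 ord0 : 'I_3) = o1 by apply: val_inj.
have E0 : (ord0 : 'I_3) = o0 by apply: val_inj.
by rewrite E2 E1 E0.
Qed.

Definition pe (b : seq (seq int)) (k : nat) (i : nat) : nat :=
  if 0 < ent b i k then `|ent b i k|%N else 0%N.
Definition ne (b : seq (seq int)) (k : nat) (i : nat) : nat :=
  if ent b i k < 0 then `|ent b i k|%N else 0%N.

Lemma ifexp (c : bool) (x : KF) (n : nat) :
  (if c then x ^+ n else 1) = x ^+ (if c then n else 0%N).
Proof. by case: c. Qed.

Lemma mutx_M (k : 'I_3) b (x : 'I_3 -> KF) :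
  mutx k (M b) x k =
  (x o0 ^+ pe b k 0 * x o1 ^+ pe b k 1 * x o2 ^+ pe b k 2 +
   x o0 ^+ ne b k 0 * x o1 ^+ ne b k 1 * x o2 ^+ ne b k 2) / x k.
Proof. by rewrite /mutx eqxx !prod3 !mxE !ifexp. Qed.

Lemma mutx_ne (k i : 'I_3) B (x : 'I_3 -> KF) : i != k -> mutx k B x i = x i.
Proof. by rewrite /mutx => /negbTE ->. Qed.

Definition mutgl (k : nat) (b : seq (seq int)) (g : seq int) : seq int :=
  [seq (if j == k then - nth 0 g k +
          ((if 0 < ent b 0 k then ent b 0 k * nth 0 g 0 else 0) +
           (if 0 < ent b 1 k then ent b 1 k * nth 0 g 1 else 0) +
           (if 0 < ent b 2 k then ent b 2 k * nth 0 g 2 else 0))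
        else nth 0 g j) | j <- iota 0 3].

Lemma mutg_M (k : 'I_3) b (g : 'I_3 -> int) gl :
  (forall i, g i = nth 0 gl i) ->
  forall j, mutg k (M b) g j = nth 0 (mutgl k b gl) j.
Proof.
move=> Hg j; rewrite /mutg /mutgl.
rewrite (nth_map 0%N); last by rewrite size_iota.
rewrite nth_iota // add0n sum3 !mxE !Hg.
by [].
Qed.

Lemma sB_mut k s : sB (mutate k s) = mutB k (sB s). Proof. by []. Qed.
Lemma sg_mut k s j : sg (mutate k s) j = mutg k (sB s) (sg s) j. Proof. by []. Qed.
Lemma sx_mut k s j : sx (mutate k s) j = mutx k (sB s) (sx s) j. Proof. by []. Qed.

Lemma frac_add (F : fieldType) (a b c d : F) : b != 0 -> d != 0 -> a/b + c/d = (a*d + c*b)/(b*d).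
Proof. by move=> hb hd; field; rewrite hb hd. Qed.
Lemma frac_mul (F : fieldType) (a b c d : F) : b != 0 -> d != 0 -> (a/b) * (c/d) = (a*c)/(b*d).
Proof. by move=> hb hd; field; rewrite hb hd. Qed.
Lemma frac_div (F : fieldType) (a b c d : F) : b != 0 -> c != 0 -> d != 0 -> (a/b) / (c/d) = (a*d)/(b*c).
Proof. by move=> hb hc hd; field; rewrite hb hc hd. Qed.

Lemma rat_aux (F : fieldType) (r s a b : F) : s != 0 -> b != 0 -> r * a * b = r / s * (a * (s * b)).
Proof. by move=> hs hb; field; rewrite hs. Qed.

Lemma cross_mul (F : fieldType) (a b c d : F) : b != 0 -> d != 0 -> a / b = c / d -> a * d = c * b.
Proof. move=> hb hd E; have -> : a = c / d * b by rewrite -E divfK. by field. Qed.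
Lemma cancel_aux (F : fieldType) (r s a b : F) : a != 0 -> b != 0 -> r * a * b = s * b * a -> r = s.
Proof. move=> ha hb E; apply: (mulIf ha); apply: (mulIf hb); by rewrite E mulrAC. Qed.

Definition one3 : 'I_3 -> rat := fun _ => 1.
Definition ev (v : KF) (r : rat) : Prop :=
  exists p q : {mpoly rat[3]}, v = tofrac p / tofrac q /\
    q.@[one3] != 0 /\ p.@[one3] = r * q.@[one3].

Lemma mev_neq0 {q : {mpoly rat[3]}} : q.@[one3] != 0 -> tofrac q != 0 :> KF.
Proof.
move=> h; rewrite tofrac_eq0; apply: contra h => /eqP ->; by rewrite meval0.
Qed.

Lemma ev_X i : ev (xinit i) 1.
Proof.
exists 'X_i, 1; split; first by rewrite /xinit tofrac1 divr1.
by rewrite meval1 mevalXU mul1r oner_neq0.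
Qed.

Lemma ev_1 : ev 1 1.
Proof. exists 1, 1; split; first by rewrite tofrac1 divr1. by rewrite meval1 mul1r oner_neq0. Qed.

Lemma ev_add u v r s : ev u r -> ev v s -> ev (u + v) (r + s).
Proof.
move=> [p [q [-> [hq hp]]]] [p' [q' [-> [hq' hp']]]].
exists (p * q' + p' * q), (q * q'); split.
  have hq0 := mev_neq0 hq; have hq0' := mev_neq0 hq'.
  by rewrite tofracD !tofracM frac_add.
rewrite mevalM mulf_neq0 //; split=> //.
rewrite mevalD !mevalM hp hp'; by generalize rat => F; ring.
Qed.

Lemma ev_mul u v r s : ev u r -> ev v s -> ev (u * v) (r * s).
Proof.
move=> [p [q [-> [hq hp]]]] [p' [q' [-> [hq' hp']]]].
exists (p * p'), (q * q'); split.
  have hq0 := mev_neq0 hq; have hq0' := mev_neq0 hq'.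
  by rewrite !tofracM frac_mul.
rewrite mevalM mulf_neq0 //; split=> //.
rewrite !mevalM hp hp'; by generalize rat => F; ring.
Qed.

Lemma ev_div u v r s : ev u r -> ev v s -> s != 0 -> ev (u / v) (r / s).
Proof.
move=> [p [q [-> [hq hp]]]] [p' [q' [-> [hq' hp']]]] hs.
have hp'0 : p'.@[one3] != 0 by rewrite hp' mulf_neq0.
exists (p * q'), (q * p'); split.
  have hq0 := mev_neq0 hq; have hq0' := mev_neq0 hq'; have hp0 := mev_neq0 hp'0.
  by rewrite !tofracM frac_div.
rewrite mevalM mulf_neq0 //; split=> //.
rewrite !mevalM hp hp'; exact: rat_aux.
Qed.

Lemma ev_exp u r n : ev u r -> ev (u ^+ n) (r ^+ n).
Proof.
move=> h; elim: n => [|n IH]; first by rewrite !expr0; exact: ev_1.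
by rewrite !exprS; apply: ev_mul.
Qed.

Lemma ev_uniq {v r s} : ev v r -> ev v s -> r = s.
Proof.
move=> [p [q [-> [hq hp]]]] [p' [q' [E [hq' hp']]]].
have hq0 := mev_neq0 hq; have hq0' := mev_neq0 hq'.
have : tofrac (p * q') = tofrac (p' * q) :> KF.
  by rewrite !tofracM; apply: cross_mul.
move/eqP; rewrite tofrac_eq => /eqP /(congr1 (meval one3)).
rewrite !mevalM hp hp' => E2.
apply: (mulIf hq'); apply: (mulIf hq); by rewrite mulrAC E2 mulrAC.
Qed.

Lemma ev_neq0 {v r} : ev v r -> r != 0 -> v != 0.
Proof.
move=> [p [q [-> [hq hp]]]] hr.
have hp0 : p.@[one3] != 0 by rewrite hp mulf_neq0.
by rewrite mulf_neq0 ?invr_eq0 ?mev_neq0.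
Qed.

Definition posv (v : KF) := exists r : rat, 0 < r /\ ev v r.

Lemma posv_neq0 {v} : posv v -> v != 0.
Proof. by move=> [r [hr hv]]; apply: (ev_neq0 hv); rewrite gt_eqF. Qed.

Lemma posv_mul u v : posv u -> posv v -> posv (u * v).
Proof. move=> [r [hr hu]] [s [hs hv]]; exists (r * s); split; [exact: mulr_gt0 | exact: ev_mul]. Qed.
Lemma posv_add u v : posv u -> posv v -> posv (u + v).
Proof. move=> [r [hr hu]] [s [hs hv]]; exists (r + s); split; [exact: addr_gt0 | exact: ev_add]. Qed.
Lemma posv_div u v : posv u -> posv v -> posv (u / v).
Proof. move=> [r [hr hu]] [s [hs hv]]; exists (r / s); split; [exact: divr_gt0 | apply: ev_div => //]. by rewrite gt_eqF. Qed.
Lemma posv_1 : posv 1.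
Proof. by exists 1; split; [exact: ltr01 | exact: ev_1]. Qed.
Lemma posv_exp u n : posv u -> posv (u ^+ n).
Proof. move=> h; elim: n => [|n IH]; first by rewrite expr0; exact: posv_1. by rewrite exprS; apply: posv_mul. Qed.

Lemma posv_prod (P : pred 'I_3) (F : 'I_3 -> KF) :
  (forall i, posv (F i)) -> posv (\prod_(i < 3 | P i) F i).
Proof. move=> h; apply: (big_ind posv) => //; [exact: posv_1 | exact: posv_mul]. Qed.

Definition allpos (s : gseed) := forall i, posv (sx s i).

Lemma allpos_mut k s : allpos s -> allpos (mutate k s).
Proof.
move=> h i; rewrite sx_mut /mutx; case: (i == k) => //.
apply: posv_div => //; apply: posv_add; apply: posv_prod => j; exact: posv_exp.
Qed.

Lemma posv_num {a c : KF} : posv (a / c) -> a != 0.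
Proof. move=> /posv_neq0; apply: contra => /eqP ->; by rewrite mul0r. Qed.

Definition X3 : KF := xinit o2.
Definition W : KF := (xinit o2 + (xinit o0 + xinit o1) ^+ 2) / (xinit o0 * xinit o1 * xinit o2).

Ltac evpe := repeat match goal with
 | |- context [pe ?b ?k ?i] => let v := eval vm_compute in (pe b k i) in change (pe b k i) with v
 | |- context [ne ?b ?k ?i] => let v := eval vm_compute in (ne b k i) in change (ne b k i) with v
 | H : context [pe ?b ?k ?i] |- _ => let v := eval vm_compute in (pe b k i) in change (pe b k i) with v in H
 | H : context [ne ?b ?k ?i] |- _ => let v := eval vm_compute in (ne b k i) in change (ne b k i) with v in H
 end.

Ltac trtac k s :=
  let Hb := fresh "Hb" in let Hg := fresh "Hg" in let Hp := fresh "Hp" in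
  let HF := fresh "HF" in let HG := fresh "HG" in let Hp' := fresh "Hp'" in
  let n0 := fresh "n0" in let n1 := fresh "n1" in let n2 := fresh "n2" in
  let hN := fresh "hN" in
  case=> Hb [Hg [Hp [HF HG]]];
  have Hp' := @allpos_mut k _ Hp;
  have n0 := posv_neq0 (Hp o0); have n1 := posv_neq0 (Hp o1); have n2 := posv_neq0 (Hp o2);
  have hN := Hp' k;
  rewrite sx_mut Hb mutx_M in hN; move/posv_num: hN => hN;
  split; [by rewrite sB_mut Hb mutB_M; congr M; vm_compute|];
  split; [by move=> i; rewrite sg_mut Hb (mutg_M _ _ _ _ Hg); congr (nth _ _ _); vm_compute|];
  split; [exact Hp'|];
  rewrite !sx_mut Hb (mutx_M k) ?mutx_ne //; evpe;
  rewrite ?expr0 ?expr1 ?mul1r ?mulr1 in hN *;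
  split; [rewrite {1}HF | rewrite {1}HG];
  clear -n0 n1 n2 hN; move: n0 n1 n2 hN; move: (sx s o0) (sx s o1) (sx s o2);
  generalize KF; intros ? ? ? ? ? ? ? ?; field;
  rewrite ?mulf_neq0 //; repeat (apply/andP; split); by [].

Definition St0 (s : gseed) : Prop :=
  sB s = M [:: [:: 0; 2; -1]; [:: -2; 0; 1]; [:: 1; -1; 0]] /\ (forall i, sg s i = nth 0 [:: 1; 1; 2] i) /\ allpos s /\
  X3 = (sx s o2) /\
  W = ((sx s o2 + (sx s o0 + sx s o1) ^+ 2) / (sx s o0 * sx s o1 * sx s o2)).

Definition St1 (s : gseed) : Prop :=
  sB s = M [:: [:: 0; -2; 1]; [:: 2; 0; -1]; [:: -1; 1; 0]] /\ (forall i, sg s i = nth 0 [:: 1; 1; 2] i) /\ allpos s /\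
  X3 = (sx s o2) /\
  W = ((sx s o2 + (sx s o0 + sx s o1) ^+ 2) / (sx s o0 * sx s o1 * sx s o2)).

Definition St2 (s : gseed) : Prop :=
  sB s = M [:: [:: 0; 1; 1]; [:: -1; 0; -1]; [:: -1; 1; 0]] /\ (forall i, sg s i = nth 0 [:: 1; 1; -1] i) /\ allpos s /\
  X3 = ((sx s o0 + sx s o1) / sx s o2) /\
  W = ((1 + sx s o2 * (sx s o0 + sx s o1)) / (sx s o0 * sx s o1)).

Definition St3 (s : gseed) : Prop :=
  sB s = M [:: [:: 0; -1; -1]; [:: 1; 0; 1]; [:: 1; -1; 0]] /\ (forall i, sg s i = nth 0 [:: 1; 1; -1] i) /\ allpos s /\
  X3 = ((sx s o0 + sx s o1) / sx s o2) /\
  W = ((1 + sx s o2 * (sx s o0 + sx s o1)) / (sx s o0 * sx s o1)).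

Definition St4 (s : gseed) : Prop :=
  sB s = M [:: [:: 0; -1; -1]; [:: 1; 0; -1]; [:: 1; 1; 0]] /\ (forall i, sg s i = nth 0 [:: -1; 1; -1] i) /\ allpos s /\
  X3 = ((1 + sx s o1 * (sx s o0 + sx s o2)) / (sx s o0 * sx s o2)) /\
  W = ((sx s o0 + sx s o2) / sx s o1).

Definition St5 (s : gseed) : Prop :=
  sB s = M [:: [:: 0; -1; 1]; [:: 1; 0; 1]; [:: -1; -1; 0]] /\ (forall i, sg s i = nth 0 [:: 1; -1; -1] i) /\ allpos s /\
  X3 = ((1 + sx s o0 * (sx s o1 + sx s o2)) / (sx s o1 * sx s o2)) /\
  W = ((sx s o1 + sx s o2) / sx s o0).

Definition St6 (s : gseed) : Prop :=
  sB s = M [:: [:: 0; 1; 1]; [:: -1; 0; 1]; [:: -1; -1; 0]] /\ (forall i, sg s i = nth 0 [:: -1; 1; -1] i) /\ allpos s /\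
  X3 = ((1 + sx s o1 * (sx s o0 + sx s o2)) / (sx s o0 * sx s o2)) /\
  W = ((sx s o0 + sx s o2) / sx s o1).

Definition St7 (s : gseed) : Prop :=
  sB s = M [:: [:: 0; 1; -1]; [:: -1; 0; -1]; [:: 1; 1; 0]] /\ (forall i, sg s i = nth 0 [:: 1; -1; -1] i) /\ allpos s /\
  X3 = ((1 + sx s o0 * (sx s o1 + sx s o2)) / (sx s o1 * sx s o2)) /\
  W = ((sx s o1 + sx s o2) / sx s o0).

Definition St8 (s : gseed) : Prop :=
  sB s = M [:: [:: 0; 1; -2]; [:: -1; 0; 1]; [:: 2; -1; 0]] /\ (forall i, sg s i = nth 0 [:: -1; -2; -1] i) /\ allpos s /\
  X3 = ((sx s o1 + (sx s o0 + sx s o2) ^+ 2) / (sx s o0 * sx s o2 * sx s o1)) /\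
  W = (sx s o1).

Definition St9 (s : gseed) : Prop :=
  sB s = M [:: [:: 0; -1; 1]; [:: 1; 0; 1]; [:: -1; -1; 0]] /\ (forall i, sg s i = nth 0 [:: -1; 1; 1] i) /\ allpos s /\
  X3 = ((sx s o1 + sx s o2) / sx s o0) /\
  W = ((1 + sx s o0 * (sx s o1 + sx s o2)) / (sx s o1 * sx s o2)).

Definition St10 (s : gseed) : Prop :=
  sB s = M [:: [:: 0; 1; -1]; [:: -1; 0; 2]; [:: 1; -2; 0]] /\ (forall i, sg s i = nth 0 [:: -2; -1; -1] i) /\ allpos s /\
  X3 = ((sx s o0 + (sx s o1 + sx s o2) ^+ 2) / (sx s o1 * sx s o2 * sx s o0)) /\
  W = (sx s o0).

Definition St11 (s : gseed) : Prop :=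
  sB s = M [:: [:: 0; -1; -1]; [:: 1; 0; -1]; [:: 1; 1; 0]] /\ (forall i, sg s i = nth 0 [:: 1; -1; 1] i) /\ allpos s /\
  X3 = ((sx s o0 + sx s o2) / sx s o1) /\
  W = ((1 + sx s o1 * (sx s o0 + sx s o2)) / (sx s o0 * sx s o2)).

Definition St12 (s : gseed) : Prop :=
  sB s = M [:: [:: 0; -1; 2]; [:: 1; 0; -1]; [:: -2; 1; 0]] /\ (forall i, sg s i = nth 0 [:: -1; -2; -1] i) /\ allpos s /\
  X3 = ((sx s o1 + (sx s o0 + sx s o2) ^+ 2) / (sx s o0 * sx s o2 * sx s o1)) /\
  W = (sx s o1).

Definition St13 (s : gseed) : Prop :=
  sB s = M [:: [:: 0; 1; -1]; [:: -1; 0; -1]; [:: 1; 1; 0]] /\ (forall i, sg s i = nth 0 [:: -1; 1; 1] i) /\ allpos s /\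
  X3 = ((sx s o1 + sx s o2) / sx s o0) /\
  W = ((1 + sx s o0 * (sx s o1 + sx s o2)) / (sx s o1 * sx s o2)).

Definition St14 (s : gseed) : Prop :=
  sB s = M [:: [:: 0; -1; 1]; [:: 1; 0; -2]; [:: -1; 2; 0]] /\ (forall i, sg s i = nth 0 [:: -2; -1; -1] i) /\ allpos s /\
  X3 = ((sx s o0 + (sx s o1 + sx s o2) ^+ 2) / (sx s o1 * sx s o2 * sx s o0)) /\
  W = (sx s o0).

Definition St15 (s : gseed) : Prop :=
  sB s = M [:: [:: 0; 1; 1]; [:: -1; 0; 1]; [:: -1; -1; 0]] /\ (forall i, sg s i = nth 0 [:: 1; -1; 1] i) /\ allpos s /\
  X3 = ((sx s o0 + sx s o2) / sx s o1) /\
  W = ((1 + sx s o1 * (sx s o0 + sx s o2)) / (sx s o0 * sx s o2)).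

Definition St16 (s : gseed) : Prop :=
  sB s = M [:: [:: 0; 1; -1]; [:: -1; 0; 2]; [:: 1; -2; 0]] /\ (forall i, sg s i = nth 0 [:: 2; 1; 1] i) /\ allpos s /\
  X3 = (sx s o0) /\
  W = ((sx s o0 + (sx s o1 + sx s o2) ^+ 2) / (sx s o1 * sx s o2 * sx s o0)).

Definition St17 (s : gseed) : Prop :=
  sB s = M [:: [:: 0; 1; 1]; [:: -1; 0; -1]; [:: -1; 1; 0]] /\ (forall i, sg s i = nth 0 [:: -1; -1; 1] i) /\ allpos s /\
  X3 = ((1 + sx s o2 * (sx s o0 + sx s o1)) / (sx s o0 * sx s o1)) /\
  W = ((sx s o0 + sx s o1) / sx s o2).

Definition St18 (s : gseed) : Prop :=
  sB s = M [:: [:: 0; 1; -2]; [:: -1; 0; 1]; [:: 2; -1; 0]] /\ (forall i, sg s i = nth 0 [:: 1; 2; 1] i) /\ allpos s /\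
  X3 = (sx s o1) /\
  W = ((sx s o1 + (sx s o0 + sx s o2) ^+ 2) / (sx s o0 * sx s o2 * sx s o1)).

Definition St19 (s : gseed) : Prop :=
  sB s = M [:: [:: 0; -1; 1]; [:: 1; 0; -2]; [:: -1; 2; 0]] /\ (forall i, sg s i = nth 0 [:: 2; 1; 1] i) /\ allpos s /\
  X3 = (sx s o0) /\
  W = ((sx s o0 + (sx s o1 + sx s o2) ^+ 2) / (sx s o1 * sx s o2 * sx s o0)).

Definition St20 (s : gseed) : Prop :=
  sB s = M [:: [:: 0; -1; -1]; [:: 1; 0; 1]; [:: 1; -1; 0]] /\ (forall i, sg s i = nth 0 [:: -1; -1; 1] i) /\ allpos s /\
  X3 = ((1 + sx s o2 * (sx s o0 + sx s o1)) / (sx s o0 * sx s o1)) /\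
  W = ((sx s o0 + sx s o1) / sx s o2).

Definition St21 (s : gseed) : Prop :=
  sB s = M [:: [:: 0; -1; 2]; [:: 1; 0; -1]; [:: -2; 1; 0]] /\ (forall i, sg s i = nth 0 [:: 1; 2; 1] i) /\ allpos s /\
  X3 = (sx s o1) /\
  W = ((sx s o1 + (sx s o0 + sx s o2) ^+ 2) / (sx s o0 * sx s o2 * sx s o1)).

Definition St22 (s : gseed) : Prop :=
  sB s = M [:: [:: 0; 2; -1]; [:: -2; 0; 1]; [:: 1; -1; 0]] /\ (forall i, sg s i = nth 0 [:: -1; -1; -2] i) /\ allpos s /\
  X3 = ((sx s o2 + (sx s o0 + sx s o1) ^+ 2) / (sx s o0 * sx s o1 * sx s o2)) /\
  W = (sx s o2).

Definition St23 (s : gseed) : Prop :=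
  sB s = M [:: [:: 0; -2; 1]; [:: 2; 0; -1]; [:: -1; 1; 0]] /\ (forall i, sg s i = nth 0 [:: -1; -1; -2] i) /\ allpos s /\
  X3 = ((sx s o2 + (sx s o0 + sx s o1) ^+ 2) / (sx s o0 * sx s o1 * sx s o2)) /\
  W = (sx s o2).

Lemma tr0_0 s : St0 s -> St1 (mutate o0 s).
Proof. trtac o0 s. Qed.

Lemma tr0_1 s : St0 s -> St1 (mutate o1 s).
Proof. trtac o1 s. Qed.

Lemma tr0_2 s : St0 s -> St2 (mutate o2 s).
Proof. trtac o2 s. Qed.

Lemma tr1_0 s : St1 s -> St0 (mutate o0 s).
Proof. trtac o0 s. Qed.

Lemma tr1_1 s : St1 s -> St0 (mutate o1 s).
Proof. trtac o1 s. Qed.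

Lemma tr1_2 s : St1 s -> St3 (mutate o2 s).
Proof. trtac o2 s. Qed.

Lemma tr2_0 s : St2 s -> St4 (mutate o0 s).
Proof. trtac o0 s. Qed.

Lemma tr2_1 s : St2 s -> St5 (mutate o1 s).
Proof. trtac o1 s. Qed.

Lemma tr2_2 s : St2 s -> St0 (mutate o2 s).
Proof. trtac o2 s. Qed.

Lemma tr3_0 s : St3 s -> St6 (mutate o0 s).
Proof. trtac o0 s. Qed.

Lemma tr3_1 s : St3 s -> St7 (mutate o1 s).
Proof. trtac o1 s. Qed.

Lemma tr3_2 s : St3 s -> St1 (mutate o2 s).
Proof. trtac o2 s. Qed.

Lemma tr4_0 s : St4 s -> St2 (mutate o0 s).
Proof. trtac o0 s. Qed.

Lemma tr4_1 s : St4 s -> St8 (mutate o1 s).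
Proof. trtac o1 s. Qed.

Lemma tr4_2 s : St4 s -> St9 (mutate o2 s).
Proof. trtac o2 s. Qed.

Lemma tr5_0 s : St5 s -> St10 (mutate o0 s).
Proof. trtac o0 s. Qed.

Lemma tr5_1 s : St5 s -> St2 (mutate o1 s).
Proof. trtac o1 s. Qed.

Lemma tr5_2 s : St5 s -> St11 (mutate o2 s).
Proof. trtac o2 s. Qed.

Lemma tr6_0 s : St6 s -> St3 (mutate o0 s).
Proof. trtac o0 s. Qed.

Lemma tr6_1 s : St6 s -> St12 (mutate o1 s).
Proof. trtac o1 s. Qed.

Lemma tr6_2 s : St6 s -> St13 (mutate o2 s).
Proof. trtac o2 s. Qed.

Lemma tr7_0 s : St7 s -> St14 (mutate o0 s).
Proof. trtac o0 s. Qed.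

Lemma tr7_1 s : St7 s -> St3 (mutate o1 s).
Proof. trtac o1 s. Qed.

Lemma tr7_2 s : St7 s -> St15 (mutate o2 s).
Proof. trtac o2 s. Qed.

Lemma tr8_0 s : St8 s -> St12 (mutate o0 s).
Proof. trtac o0 s. Qed.

Lemma tr8_1 s : St8 s -> St4 (mutate o1 s).
Proof. trtac o1 s. Qed.

Lemma tr8_2 s : St8 s -> St12 (mutate o2 s).
Proof. trtac o2 s. Qed.

Lemma tr9_0 s : St9 s -> St16 (mutate o0 s).
Proof. trtac o0 s. Qed.

Lemma tr9_1 s : St9 s -> St17 (mutate o1 s).
Proof. trtac o1 s. Qed.

Lemma tr9_2 s : St9 s -> St4 (mutate o2 s).
Proof. trtac o2 s. Qed.

Lemma tr10_0 s : St10 s -> St5 (mutate o0 s).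
Proof. trtac o0 s. Qed.

Lemma tr10_1 s : St10 s -> St14 (mutate o1 s).
Proof. trtac o1 s. Qed.

Lemma tr10_2 s : St10 s -> St14 (mutate o2 s).
Proof. trtac o2 s. Qed.

Lemma tr11_0 s : St11 s -> St17 (mutate o0 s).
Proof. trtac o0 s. Qed.

Lemma tr11_1 s : St11 s -> St18 (mutate o1 s).
Proof. trtac o1 s. Qed.

Lemma tr11_2 s : St11 s -> St5 (mutate o2 s).
Proof. trtac o2 s. Qed.

Lemma tr12_0 s : St12 s -> St8 (mutate o0 s).
Proof. trtac o0 s. Qed.

Lemma tr12_1 s : St12 s -> St6 (mutate o1 s).
Proof. trtac o1 s. Qed.

Lemma tr12_2 s : St12 s -> St8 (mutate o2 s).
Proof. trtac o2 s. Qed.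

Lemma tr13_0 s : St13 s -> St19 (mutate o0 s).
Proof. trtac o0 s. Qed.

Lemma tr13_1 s : St13 s -> St20 (mutate o1 s).
Proof. trtac o1 s. Qed.

Lemma tr13_2 s : St13 s -> St6 (mutate o2 s).
Proof. trtac o2 s. Qed.

Lemma tr14_0 s : St14 s -> St7 (mutate o0 s).
Proof. trtac o0 s. Qed.

Lemma tr14_1 s : St14 s -> St10 (mutate o1 s).
Proof. trtac o1 s. Qed.

Lemma tr14_2 s : St14 s -> St10 (mutate o2 s).
Proof. trtac o2 s. Qed.

Lemma tr15_0 s : St15 s -> St20 (mutate o0 s).
Proof. trtac o0 s. Qed.

Lemma tr15_1 s : St15 s -> St21 (mutate o1 s).
Proof. trtac o1 s. Qed.

Lemma tr15_2 s : St15 s -> St7 (mutate o2 s).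
Proof. trtac o2 s. Qed.

Lemma tr16_0 s : St16 s -> St9 (mutate o0 s).
Proof. trtac o0 s. Qed.

Lemma tr16_1 s : St16 s -> St19 (mutate o1 s).
Proof. trtac o1 s. Qed.

Lemma tr16_2 s : St16 s -> St19 (mutate o2 s).
Proof. trtac o2 s. Qed.

Lemma tr17_0 s : St17 s -> St11 (mutate o0 s).
Proof. trtac o0 s. Qed.

Lemma tr17_1 s : St17 s -> St9 (mutate o1 s).
Proof. trtac o1 s. Qed.

Lemma tr17_2 s : St17 s -> St22 (mutate o2 s).
Proof. trtac o2 s. Qed.

Lemma tr18_0 s : St18 s -> St21 (mutate o0 s).
Proof. trtac o0 s. Qed.

Lemma tr18_1 s : St18 s -> St11 (mutate o1 s).
Proof. trtac o1 s. Qed.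

Lemma tr18_2 s : St18 s -> St21 (mutate o2 s).
Proof. trtac o2 s. Qed.

Lemma tr19_0 s : St19 s -> St13 (mutate o0 s).
Proof. trtac o0 s. Qed.

Lemma tr19_1 s : St19 s -> St16 (mutate o1 s).
Proof. trtac o1 s. Qed.

Lemma tr19_2 s : St19 s -> St16 (mutate o2 s).
Proof. trtac o2 s. Qed.

Lemma tr20_0 s : St20 s -> St15 (mutate o0 s).
Proof. trtac o0 s. Qed.

Lemma tr20_1 s : St20 s -> St13 (mutate o1 s).
Proof. trtac o1 s. Qed.

Lemma tr20_2 s : St20 s -> St23 (mutate o2 s).
Proof. trtac o2 s. Qed.

Lemma tr21_0 s : St21 s -> St18 (mutate o0 s).
Proof. trtac o0 s. Qed.

Lemma tr21_1 s : St21 s -> St15 (mutate o1 s).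
Proof. trtac o1 s. Qed.

Lemma tr21_2 s : St21 s -> St18 (mutate o2 s).
Proof. trtac o2 s. Qed.

Lemma tr22_0 s : St22 s -> St23 (mutate o0 s).
Proof. trtac o0 s. Qed.

Lemma tr22_1 s : St22 s -> St23 (mutate o1 s).
Proof. trtac o1 s. Qed.

Lemma tr22_2 s : St22 s -> St17 (mutate o2 s).
Proof. trtac o2 s. Qed.

Lemma tr23_0 s : St23 s -> St22 (mutate o0 s).
Proof. trtac o0 s. Qed.

Lemma tr23_1 s : St23 s -> St22 (mutate o1 s).
Proof. trtac o1 s. Qed.

Lemma tr23_2 s : St23 s -> St20 (mutate o2 s).
Proof. trtac o2 s. Qed.

Definition Inv (s : gseed) : Prop :=
  St0 s \/ St1 s \/ St2 s \/ St3 s \/ St4 s \/ St5 s \/ St6 s \/ St7 s \/ St8 s \/ St9 s \/ St10 s \/ St11 s \/ St12 s \/ St13 s \/ St14 s \/ St15 s \/ St16 s \/ St17 s \/ St18 s \/ St19 s \/ St20 s \/ St21 s \/ St22 s \/ St23 s.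

Lemma step0 s k : St0 s -> Inv (mutate k s).
Proof. move=> H; move: k; apply: ord3P.
- by right; left; exact: (tr0_0 _ H).
- by right; left; exact: (tr0_1 _ H).
- by right; right; left; exact: (tr0_2 _ H).
Qed.
Lemma step1 s k : St1 s -> Inv (mutate k s).
Proof. move=> H; move: k; apply: ord3P.
- by left; exact: (tr1_0 _ H).
- by left; exact: (tr1_1 _ H).
- by right; right; right; left; exact: (tr1_2 _ H).
Qed.
Lemma step2 s k : St2 s -> Inv (mutate k s).
Proof. move=> H; move: k; apply: ord3P.
- by right; right; right; right; left; exact: (tr2_0 _ H).
- by right; right; right; right; right; left; exact: (tr2_1 _ H).
- by left; exact: (tr2_2 _ H).
Qed.
Lemma step3 s k : St3 s -> Inv (mutate k s).
Proof. move=> H; move: k; apply: ord3P.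
- by right; right; right; right; right; right; left; exact: (tr3_0 _ H).
- by right; right; right; right; right; right; right; left; exact: (tr3_1 _ H).
- by right; left; exact: (tr3_2 _ H).
Qed.
Lemma step4 s k : St4 s -> Inv (mutate k s).
Proof. move=> H; move: k; apply: ord3P.
- by right; right; left; exact: (tr4_0 _ H).
- by right; right; right; right; right; right; right; right; left; exact: (tr4_1 _ H).
- by right; right; right; right; right; right; right; right; right; left; exact: (tr4_2 _ H).
Qed.
Lemma step5 s k : St5 s -> Inv (mutate k s).
Proof. move=> H; move: k; apply: ord3P.
- by right; right; right; right; right; right; right; right; right; right; left; exact: (tr5_0 _ H).
- by right; right; left; exact: (tr5_1 _ H).
- by right; right; right; right; right; right; right; right; right; right; right; left; exact: (tr5_2 _ H).
Qed.
Lemma step6 s k : St6 s -> Inv (mutate k s).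
Proof. move=> H; move: k; apply: ord3P.
- by right; right; right; left; exact: (tr6_0 _ H).
- by right; right; right; right; right; right; right; right; right; right; right; right; left; exact: (tr6_1 _ H).
- by right; right; right; right; right; right; right; right; right; right; right; right; right; left; exact: (tr6_2 _ H).
Qed.
Lemma step7 s k : St7 s -> Inv (mutate k s).
Proof. move=> H; move: k; apply: ord3P.
- by right; right; right; right; right; right; right; right; right; right; right; right; right; right; left; exact: (tr7_0 _ H).
- by right; right; right; left; exact: (tr7_1 _ H).
- by right; right; right; right; right; right; right; right; right; right; right; right; right; right; right; left; exact: (tr7_2 _ H).
Qed.
Lemma step8 s k : St8 s -> Inv (mutate k s).
Proof. move=> H; move: k; apply: ord3P.
- by right; right; right; right; right; right; right; right; right; right; right; right; left; exact: (tr8_0 _ H).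
- by right; right; right; right; left; exact: (tr8_1 _ H).
- by right; right; right; right; right; right; right; right; right; right; right; right; left; exact: (tr8_2 _ H).
Qed.
Lemma step9 s k : St9 s -> Inv (mutate k s).
Proof. move=> H; move: k; apply: ord3P.
- by right; right; right; right; right; right; right; right; right; right; right; right; right; right; right; right; left; exact: (tr9_0 _ H).
- by right; right; right; right; right; right; right; right; right; right; right; right; right; right; right; right; right; left; exact: (tr9_1 _ H).
- by right; right; right; right; left; exact: (tr9_2 _ H).
Qed.
Lemma step10 s k : St10 s -> Inv (mutate k s).
Proof. move=> H; move: k; apply: ord3P.
- by right; right; right; right; right; left; exact: (tr10_0 _ H).
- by right; right; right; right; right; right; right; right; right; right; right; right; right; right; left; exact: (tr10_1 _ H).
- by right; right; right; right; right; right; right; right; right; right; right; right; right; right; left; exact: (tr10_2 _ H).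
Qed.
Lemma step11 s k : St11 s -> Inv (mutate k s).
Proof. move=> H; move: k; apply: ord3P.
- by right; right; right; right; right; right; right; right; right; right; right; right; right; right; right; right; right; left; exact: (tr11_0 _ H).
- by right; right; right; right; right; right; right; right; right; right; right; right; right; right; right; right; right; right; left; exact: (tr11_1 _ H).
- by right; right; right; right; right; left; exact: (tr11_2 _ H).
Qed.
Lemma step12 s k : St12 s -> Inv (mutate k s).
Proof. move=> H; move: k; apply: ord3P.
- by right; right; right; right; right; right; right; right; left; exact: (tr12_0 _ H).
- by right; right; right; right; right; right; left; exact: (tr12_1 _ H).
- by right; right; right; right; right; right; right; right; left; exact: (tr12_2 _ H).
Qed.
Lemma step13 s k : St13 s -> Inv (mutate k s).
Proof. move=> H; move: k; apply: ord3P.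
- by right; right; right; right; right; right; right; right; right; right; right; right; right; right; right; right; right; right; right; left; exact: (tr13_0 _ H).
- by right; right; right; right; right; right; right; right; right; right; right; right; right; right; right; right; right; right; right; right; left; exact: (tr13_1 _ H).
- by right; right; right; right; right; right; left; exact: (tr13_2 _ H).
Qed.
Lemma step14 s k : St14 s -> Inv (mutate k s).
Proof. move=> H; move: k; apply: ord3P.
- by right; right; right; right; right; right; right; left; exact: (tr14_0 _ H).
- by right; right; right; right; right; right; right; right; right; right; left; exact: (tr14_1 _ H).
- by right; right; right; right; right; right; right; right; right; right; left; exact: (tr14_2 _ H).
Qed.
Lemma step15 s k : St15 s -> Inv (mutate k s).
Proof. move=> H; move: k; apply: ord3P.
- by right; right; right; right; right; right; right; right; right; right; right; right; right; right; right; right; right; right; right; right; left; exact: (tr15_0 _ H).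
- by right; right; right; right; right; right; right; right; right; right; right; right; right; right; right; right; right; right; right; right; right; left; exact: (tr15_1 _ H).
- by right; right; right; right; right; right; right; left; exact: (tr15_2 _ H).
Qed.
Lemma step16 s k : St16 s -> Inv (mutate k s).
Proof. move=> H; move: k; apply: ord3P.
- by right; right; right; right; right; right; right; right; right; left; exact: (tr16_0 _ H).
- by right; right; right; right; right; right; right; right; right; right; right; right; right; right; right; right; right; right; right; left; exact: (tr16_1 _ H).
- by right; right; right; right; right; right; right; right; right; right; right; right; right; right; right; right; right; right; right; left; exact: (tr16_2 _ H).
Qed.
Lemma step17 s k : St17 s -> Inv (mutate k s).
Proof. move=> H; move: k; apply: ord3P.
- by right; right; right; right; right; right; right; right; right; right; right; left; exact: (tr17_0 _ H).
- by right; right; right; right; right; right; right; right; right; left; exact: (tr17_1 _ H).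
- by right; right; right; right; right; right; right; right; right; right; right; right; right; right; right; right; right; right; right; right; right; right; left; exact: (tr17_2 _ H).
Qed.
Lemma step18 s k : St18 s -> Inv (mutate k s).
Proof. move=> H; move: k; apply: ord3P.
- by right; right; right; right; right; right; right; right; right; right; right; right; right; right; right; right; right; right; right; right; right; left; exact: (tr18_0 _ H).
- by right; right; right; right; right; right; right; right; right; right; right; left; exact: (tr18_1 _ H).
- by right; right; right; right; right; right; right; right; right; right; right; right; right; right; right; right; right; right; right; right; right; left; exact: (tr18_2 _ H).
Qed.
Lemma step19 s k : St19 s -> Inv (mutate k s).
Proof. move=> H; move: k; apply: ord3P.
- by right; right; right; right; right; right; right; right; right; right; right; right; right; left; exact: (tr19_0 _ H).
- by right; right; right; right; right; right; right; right; right; right; right; right; right; right; right; right; left; exact: (tr19_1 _ H).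
- by right; right; right; right; right; right; right; right; right; right; right; right; right; right; right; right; left; exact: (tr19_2 _ H).
Qed.
Lemma step20 s k : St20 s -> Inv (mutate k s).
Proof. move=> H; move: k; apply: ord3P.
- by right; right; right; right; right; right; right; right; right; right; right; right; right; right; right; left; exact: (tr20_0 _ H).
- by right; right; right; right; right; right; right; right; right; right; right; right; right; left; exact: (tr20_1 _ H).
- by right; right; right; right; right; right; right; right; right; right; right; right; right; right; right; right; right; right; right; right; right; right; right; exact: (tr20_2 _ H).
Qed.
Lemma step21 s k : St21 s -> Inv (mutate k s).
Proof. move=> H; move: k; apply: ord3P.
- by right; right; right; right; right; right; right; right; right; right; right; right; right; right; right; right; right; right; left; exact: (tr21_0 _ H).
- by right; right; right; right; right; right; right; right; right; right; right; right; right; right; right; left; exact: (tr21_1 _ H).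
- by right; right; right; right; right; right; right; right; right; right; right; right; right; right; right; right; right; right; left; exact: (tr21_2 _ H).
Qed.
Lemma step22 s k : St22 s -> Inv (mutate k s).
Proof. move=> H; move: k; apply: ord3P.
- by right; right; right; right; right; right; right; right; right; right; right; right; right; right; right; right; right; right; right; right; right; right; right; exact: (tr22_0 _ H).
- by right; right; right; right; right; right; right; right; right; right; right; right; right; right; right; right; right; right; right; right; right; right; right; exact: (tr22_1 _ H).
- by right; right; right; right; right; right; right; right; right; right; right; right; right; right; right; right; right; left; exact: (tr22_2 _ H).
Qed.
Lemma step23 s k : St23 s -> Inv (mutate k s).
Proof. move=> H; move: k; apply: ord3P.
- by right; right; right; right; right; right; right; right; right; right; right; right; right; right; right; right; right; right; right; right; right; right; left; exact: (tr23_0 _ H).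
- by right; right; right; right; right; right; right; right; right; right; right; right; right; right; right; right; right; right; right; right; right; right; left; exact: (tr23_1 _ H).
- by right; right; right; right; right; right; right; right; right; right; right; right; right; right; right; right; right; right; right; right; left; exact: (tr23_2 _ H).
Qed.
Lemma Inv_step k s : Inv s -> Inv (mutate k s).
Proof.
case=> [H|[H|[H|[H|[H|[H|[H|[H|[H|[H|[H|[H|[H|[H|[H|[H|[H|[H|[H|[H|[H|[H|[H|H]]]]]]]]]]]]]]]]]]]]]]]; [exact: (step0 _ k H) | exact: (step1 _ k H) | exact: (step2 _ k H) | exact: (step3 _ k H) | exact: (step4 _ k H) | exact: (step5 _ k H) | exact: (step6 _ k H) | exact: (step7 _ k H) | exact: (step8 _ k H) | exact: (step9 _ k H) | exact: (step10 _ k H) | exact: (step11 _ k H) | exact: (step12 _ k H) | exact: (step13 _ k H) | exact: (step14 _ k H) | exact: (step15 _ k H) | exact: (step16 _ k H) | exact: (step17 _ k H) | exact: (step18 _ k H) | exact: (step19 _ k H) | exact: (step20 _ k H) | exact: (step21 _ k H) | exact: (step22 _ k H) | exact: (step23 _ k H)].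
Qed.

Lemma St0_seed0 : St0 seed0.
Proof.
split; first by [].
split; first by move=> i.
split; first by move=> i; exists 1; split; [exact: ltr01 | exact: ev_X].
by split.
Qed.

Lemma Inv_mutseq ks s : Inv s -> Inv (mutseq ks s).
Proof. elim: ks s => [|k ks IH] s H //=; apply: IH; exact: Inv_step. Qed.

Lemma Inv_reach s : reachable seed0 s -> Inv s.
Proof. move=> [ks ->]; apply: Inv_mutseq; left; exact: St0_seed0. Qed.

Ltac proptac := let Hg := fresh "Hg" in let HF := fresh "HF" in let HG := fresh "HG" in
  case=> _ [Hg [_ [HF HG]]]; apply: ord3P; rewrite !Hg; (split; [by [] | |]);
  move=> /eqP; rewrite ?eqxx //= => _; by [rewrite HF | rewrite HG].

Lemma Inv_props s : Inv s -> forall i,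
  [/\ sg s i \in [:: 1; -1; 2; -2], (sg s i = 2 -> sx s i = X3) & (sg s i = -2 -> sx s i = W)].
Proof.
case=> [H|[H|[H|[H|[H|[H|[H|[H|[H|[H|[H|[H|[H|[H|[H|[H|[H|[H|[H|[H|[H|[H|[H|H]]]]]]]]]]]]]]]]]]]]]]]; move: H; proptac.
Qed.

Fixpoint cseq (K a0 a1 : rat) (n : nat) : rat * rat :=
  match n with 0 => (a0, a1) | n'.+1 => let p := cseq K a0 a1 n' in (p.2, (K + p.2 ^+ 2) / p.1) end.
Definition cv K a0 a1 n := (cseq K a0 a1 n).1.

Lemma cvSS K a0 a1 n : cv K a0 a1 n.+2 = (K + cv K a0 a1 n.+1 ^+ 2) / cv K a0 a1 n.
Proof. by []. Qed.

Lemma cv_mono {K a0 a1 : rat} : 0 < K -> 0 < a0 -> a0 <= a1 ->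
  forall n, 0 < cv K a0 a1 n /\ cv K a0 a1 n < cv K a0 a1 n.+2 /\ cv K a0 a1 n.+1 < cv K a0 a1 n.+2.
Proof.
move=> hK h0 h01.
have P : forall n, 0 < cv K a0 a1 n /\ cv K a0 a1 n <= cv K a0 a1 n.+1.
  elim=> [|n [hp hle]]; first by split.
  have h1 : 0 < cv K a0 a1 n.+1 by apply: lt_le_trans hle.
  split=> //; rewrite cvSS ler_pdivlMr //; nra.
move=> n; have [hp hle] := P n; have h1 : 0 < cv K a0 a1 n.+1 by apply: lt_le_trans hle.
have h2 : cv K a0 a1 n.+1 < cv K a0 a1 n.+2 by rewrite cvSS ltr_pdivlMr //; nra.
by split=> //; split=> //; apply: le_lt_trans h2.
Qed.

Lemma cv_strict {K a0 a1 : rat} : 0 < K -> 0 < a0 -> a0 <= a1 ->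
  forall m n, (m < n)%N -> cv K a0 a1 m.+1 < cv K a0 a1 n.+1.
Proof.
move=> hK h0 h01 m; elim=> [//|n IH]; rewrite ltnS leq_eqVlt => /orP [/eqP <-|/IH h].
  by have [_ [_ h]] := cv_mono hK h0 h01 m.
by apply: lt_trans h _; have [_ [_ h2]] := cv_mono hK h0 h01 n.
Qed.

Lemma ev_eqv v r r' : ev v r -> r = r' -> ev v r'.
Proof. by move=> h <-. Qed.

Lemma ev_step a b c ra rb rc : ev a ra -> ev b rb -> ev c rc -> rc != 0 ->
  ev ((a + b ^+ 2) / c) ((ra + rb ^+ 2) / rc).
Proof. move=> ha hb hc hrc; apply: ev_div => //; apply: ev_add => //; exact: ev_exp. Qed.

Definition oldS n : 'I_3 := if odd n then o1 else o0.
Definition newS n : 'I_3 := if odd n then o0 else o1.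
Definition Sq n := mutseq [seq oldS i | i <- iota 0 n] seed0.

Lemma Sq_succ n : Sq n.+1 = mutate (oldS n) (Sq n).
Proof. by rewrite /Sq -[n.+1]addn1 iotaD map_cat /mutseq foldl_cat. Qed.

Lemma ev_X3 : ev X3 1. Proof. exact: ev_X. Qed.

Lemma Sq_prop n : (if odd n then St1 (Sq n) else St0 (Sq n)) /\
  ev (sx (Sq n) (newS n)) (cv 1 1 1 n.+1) /\ ev (sx (Sq n) (oldS n)) (cv 1 1 1 n).
Proof.
elim: n => [|n [HS [Hn Ho]]].
  split; first exact: St0_seed0.
  by split; exact: ev_X.
have hc : cv 1 1 1 n != 0 by have [h _] := cv_mono ltr01 ltr01 (lexx 1) n; rewrite gt_eqF.
rewrite Sq_succ /newS /oldS cvSS.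
move: HS Hn Ho; rewrite /newS /oldS; case Hod: (odd n) => HS Hn Ho.
- have -> : odd n.+1 = false by rewrite /= Hod.
  split; first exact: tr1_1.
  have [Hb [_ [_ [HF _]]]] := HS.
  split; last by rewrite sx_mut mutx_ne.
  rewrite sx_mut Hb mutx_M; evpe; rewrite ?expr0 ?expr1 ?mul1r ?mulr1.
  apply: ev_step => //; rewrite -HF; exact: ev_X3.
- have -> : odd n.+1 = true by rewrite /= Hod.
  split; first exact: tr0_0.
  have [Hb [_ [_ [HF _]]]] := HS.
  split; last by rewrite sx_mut mutx_ne.
  rewrite sx_mut Hb mutx_M; evpe; rewrite ?expr0 ?expr1 ?mul1r ?mulr1.
  apply: ev_step => //; rewrite -HF; exact: ev_X3.
Qed.

Lemma ev_W : ev W 5.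
Proof.
apply: (@ev_eqv _ ((1 + (1 + 1) ^+ 2) / (1 * 1 * 1))); last by apply/eqP; vm_compute.
apply: ev_div; last by apply/eqP; vm_compute.
  apply: ev_add; first exact: ev_X.
  apply: ev_exp; apply: ev_add; exact: ev_X.
by apply: ev_mul; [apply: ev_mul|]; exact: ev_X.
Qed.

Definition oldT n : 'I_3 := if odd n then o0 else o2.
Definition newT n : 'I_3 := if odd n then o2 else o0.
Definition Tq n := mutseq ([:: o2; o0; o1] ++ [seq oldT i | i <- iota 0 n]) seed0.

Lemma Tq_succ n : Tq n.+1 = mutate (oldT n) (Tq n).
Proof. by rewrite /Tq -[n.+1]addn1 iotaD map_cat catA /mutseq foldl_cat. Qed.

Lemma Tq0 : Tq 0 = mutate o1 (mutate o0 (mutate o2 seed0)).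
Proof. by []. Qed.

Lemma Tq0_prop : St8 (Tq 0) /\ ev (sx (Tq 0) o0) 3 /\ ev (sx (Tq 0) o2) 2.
Proof.
have H0 := St0_seed0.
have H1 := tr0_2 _ H0.
have H2 := tr2_0 _ H1.
split; first by rewrite Tq0; exact: (tr4_1 _ H2).
have [Hb0 _] := H0; have [Hb1 _] := H1.
have ey : ev (sx (mutate o2 seed0) o2) 2.
  rewrite sx_mut Hb0 mutx_M; evpe; rewrite ?expr0 ?expr1 ?mul1r ?mulr1.
  apply: (@ev_eqv _ ((1 + 1) / 1)); last by apply/eqP; vm_compute.
  apply: ev_div; last by apply/eqP; vm_compute.
    by apply: ev_add; exact: ev_X.
  exact: ev_X.
rewrite Tq0; split.
  rewrite sx_mut mutx_ne // sx_mut Hb1 mutx_M; evpe; rewrite ?expr0 ?expr1 ?mul1r ?mulr1.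
  apply: (@ev_eqv _ ((1 + 1 * 2) / 1)); last by apply/eqP; vm_compute.
  apply: ev_div; last by apply/eqP; vm_compute.
    apply: ev_add; first exact: ev_1.
    apply: ev_mul => //; rewrite sx_mut mutx_ne //; exact: ev_X.
  rewrite sx_mut mutx_ne //; exact: ev_X.
by rewrite sx_mut mutx_ne // sx_mut mutx_ne.
Qed.

Lemma Tq_prop n : (if odd n then St12 (Tq n) else St8 (Tq n)) /\
  ev (sx (Tq n) (newT n)) (cv 5 2 3 n.+1) /\ ev (sx (Tq n) (oldT n)) (cv 5 2 3 n).
Proof.
have h5 : (0 : rat) < 5 by [].
have h2 : (0 : rat) < 2 by [].
have h23 : (2 : rat) <= 3 by [].
elim: n => [|n [HS [Hn Ho]]].
  by have [A [B C]] := Tq0_prop; split.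
have hc : cv 5 2 3 n != 0 by have [h _] := cv_mono h5 h2 h23 n; rewrite gt_eqF.
rewrite Tq_succ /newT /oldT cvSS.
move: HS Hn Ho; rewrite /newT /oldT; case Hod: (odd n) => HS Hn Ho.
- have -> : odd n.+1 = false by rewrite /= Hod.
  split; first exact: tr12_0.
  have [Hb [_ [_ [_ HG]]]] := HS.
  split; last by rewrite sx_mut mutx_ne.
  rewrite sx_mut Hb mutx_M; evpe; rewrite ?expr0 ?expr1 ?mul1r ?mulr1.
  apply: ev_step => //; rewrite -HG; exact: ev_W.
- have -> : odd n.+1 = true by rewrite /= Hod.
  split; first exact: tr8_2.
  have [Hb [_ [_ [_ HG]]]] := HS.
  split; last by rewrite sx_mut mutx_ne.
  rewrite sx_mut Hb mutx_M; evpe; rewrite ?expr0 ?expr1 ?mul1r ?mulr1.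
  apply: ev_step => //; rewrite -HG; exact: ev_W.
Qed.

Lemma not_fin d (u : nat -> KF) (vl : nat -> rat) :
  (forall n, cv_deg seed0 d (u n)) -> (forall n, ev (u n) (vl n)) ->
  (forall m n, (m < n)%N -> vl m < vl n) -> ~ finitely_many seed0 d.
Proof.
move=> Hc He Hm [l Hl].
have Hinj : injective vl.
  move=> m n E; case: (ltngtP m n) => // h.
    by have := Hm _ _ h; rewrite E ltxx.
  by have := Hm _ _ h; rewrite E ltxx.
have Hu : uniq (map u (iota 0 (size l).+1)).
  rewrite map_inj_in_uniq ?iota_uniq // => m n _ _ E.
  apply: Hinj; apply: (ev_uniq (He m)); rewrite E; exact: He.
have Hs : {subset map u (iota 0 (size l).+1) <= l}.
  by move=> v /mapP [n _ ->]; apply: Hl.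
by have := uniq_leq_size Hu Hs; rewrite size_map size_iota ltnn.
Qed.

Lemma reach_mutseq ks : reachable seed0 (mutseq ks seed0).
Proof. by exists ks. Qed.

Lemma not_fin1 : ~ finitely_many seed0 1.
Proof.
apply: (@not_fin 1 (fun n => sx (Sq n) (newS n)) (fun n => cv 1 1 1 n.+1)).
- move=> n; exists (Sq n), (newS n); split; first exact: reach_mutseq.
  split=> //; have [HS _] := Sq_prop n.
  by move: HS; rewrite /newS; case: (odd n) => [[_ [Hg _]]|[_ [Hg _]]]; rewrite Hg.
- by move=> n; have [_ [h _]] := Sq_prop n.
- exact: cv_strict.
Qed.

Lemma not_finm1 : ~ finitely_many seed0 (-1).
Proof.
apply: (@not_fin (-1) (fun n => sx (Tq n) (newT n)) (fun n => cv 5 2 3 n.+1)).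
- move=> n; exists (Tq n), (newT n); split; first exact: reach_mutseq.
  split=> //; have [HS _] := Tq_prop n.
  by move: HS; rewrite /newT; case: (odd n) => [[_ [Hg _]]|[_ [Hg _]]]; rewrite Hg.
- by move=> n; have [_ [h _]] := Tq_prop n.
- by apply: cv_strict.
Qed.

Local Close Scope ring_scope.
Set Implicit Arguments. Unset Strict Implicit.

Lemma sig_eqP (T : Type) (A : T -> Prop) (x y : {v | A v}) : proj1_sig x = proj1_sig y -> x = y.
Proof.
case: x => x hx; case: y => y hy /= E; subst y; congr exist; apply: proof_irrelevance.
Qed.

Definition nxt (P : pred nat) (H : forall N, exists n, (N <= n) && P n) (N : nat) : nat :=
  ex_minn (H N).

Fixpoint kth (P : pred nat) (H : forall N, exists n, (N <= n) && P n) (k : nat) : nat :=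
  if k is k'.+1 then nxt H (kth H k').+1 else nxt H 0.

Lemma nxtP (P : pred nat) (H : forall N, exists n, (N <= n) && P n) N : [/\ N <= nxt (P:=P) H N, P (nxt H N) & forall n, N <= n -> P n -> nxt H N <= n].
Proof.
rewrite /nxt; case: ex_minnP => m /andP [h1 h2] h3; split=> // n hn pn; apply: h3.
by rewrite hn pn.
Qed.

Lemma kthP (P : pred nat) (H : forall N, exists n, (N <= n) && P n) k : P (kth (P:=P) H k).
Proof. by case: k => [|k] /=; case: (nxtP H 0) => // ; case: (nxtP H (kth H k).+1). Qed.

Lemma kth_lt (P : pred nat) (H : forall N, exists n, (N <= n) && P n) k : kth (P:=P) H k < kth H k.+1.
Proof. by rewrite /=; case: (nxtP H (kth H k).+1). Qed.

Lemma kth_mono (P : pred nat) (H : forall N, exists n, (N <= n) && P n) m n : m < n -> kth (P:=P) H m < kth H n.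
Proof.
elim: n => [//|n IH]; rewrite ltnS leq_eqVlt => /orP [/eqP ->|/IH h].
  exact: kth_lt.
exact: ltn_trans h (kth_lt _ _).
Qed.

Lemma kth_ge (P : pred nat) (H : forall N, exists n, (N <= n) && P n) k : k <= kth (P:=P) H k.
Proof. elim: k => [//|k IH]; exact: leq_ltn_trans IH (kth_lt _ _). Qed.

Lemma kth_surj (P : pred nat) (H : forall N, exists n, (N <= n) && P n) n : P n -> exists k, kth (P:=P) H k = n.
Proof.
move=> pn.
suff: forall k, n <= kth H k -> exists j, kth H j = n by apply; exact: kth_ge.
elim=> [|k IH] hle.
  exists 0; apply/eqP; rewrite eqn_leq hle andbT /=.
  by case: (nxtP H 0) => _ _ ->.
case: (leqP n (kth H k)) => h; first exact: IH.
exists k.+1; apply/eqP; rewrite eqn_leq hle andbT /=.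
by case: (nxtP H (kth H k).+1) => _ _ ->.
Qed.

Lemma enum_bij (T : eqType) (A : T -> Prop) (f : nat -> T) (ok : nat -> bool) :
  (forall v, A v <-> exists n, ok n /\ f n = v) ->
  ~ (exists l : seq T, forall v, A v -> v \in l) ->
  exists e : nat -> {v | A v}, bijective e.
Proof.
move=> HA Hinf.
pose new := fun n => ok n && all (fun m => ~~ (ok m && (f m == f n))) (iota 0 n).
have minnew : forall v, A v -> exists n, new n /\ f n = v.
  move=> v /HA [n0 [ok0 f0]].
  have ex : exists n, ok n && (f n == v) by exists n0; rewrite ok0 f0 eqxx.
  case: (ex_minnP ex) => n /andP [okn /eqP fn] minn.
  exists n; split=> //; rewrite /new okn /=.
  apply/allP => m; rewrite mem_iota add0n => /andP [_ lt].
  apply/negP => /andP [okm /eqP fm].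
  have := minn m; rewrite okm fm fn eqxx => /(_ isT).
  by rewrite leqNgt lt.
have infnew : forall N, exists n, (N <= n) && new n.
  move=> N; apply: NNPP => Hno; apply: Hinf.
  exists (map f (iota 0 N)) => v Av.
  case: (minnew v Av) => n [nn fn].
  have lt : n < N.
    rewrite ltnNge; apply/negP => le; apply: Hno; exists n; by rewrite le nn.
  by rewrite -fn map_f // mem_iota.
have Aof : forall k, A (f (kth infnew k)).
  move=> k; apply/HA; exists (kth infnew k); split=> //.
  by have /andP [] := kthP infnew k.
pose e := fun k => exist A (f (kth infnew k)) (Aof k).
have einj : injective e.
  move=> m n /(congr1 (@proj1_sig _ _)) /= E.
  wlog h : m n E / m < n.
    move=> W; case: (ltngtP m n) => h //; first exact: W.
    by apply/esym/W.
  have := kthP infnew n; rewrite /new => /andP [_ /allP /(_ (kth infnew m))].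
  rewrite mem_iota add0n kth_mono // E eqxx andbT => /(_ isT).
  by have /andP [-> _] := kthP infnew m.
have esurj : forall x : {v | A v}, exists k, f (kth infnew k) == proj1_sig x.
  move=> [v Av] /=; case: (minnew v Av) => n [nn fn].
  case: (kth_surj infnew nn) => k hk; exists k; by rewrite hk fn.
exists e, (fun x => ex_minn (esurj x)).
  move=> k; apply: einj; apply: sig_eqP => /=.
  by case: ex_minnP => j /eqP.
move=> x; apply: sig_eqP => /=.
by case: ex_minnP => j /eqP.
Qed.

Unset Implicit Arguments. Set Strict Implicit.
Local Open Scope ring_scope.

Definition enf (n : nat) : KF :=
  if @unpickle (seq 'I_3 * 'I_3)%type n is Some p then sx (mutseq p.1 seed0) p.2 else 0.
Definition enok (d : int) (n : nat) : bool :=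
  if @unpickle (seq 'I_3 * 'I_3)%type n is Some p then sg (mutseq p.1 seed0) p.2 == d else false.

Lemma cvA d v : cv_deg seed0 d v <-> exists n, enok d n /\ enf n = v.
Proof.
split.
  move=> [s [i [[ks ->] [<- <-]]]]; exists (pickle (ks, i)).
  by rewrite /enok /enf pickleK /= eqxx.
move=> [n []]; rewrite /enok /enf.
case: (@unpickle (seq 'I_3 * 'I_3)%type n) => [[ks i]|] //= /eqP Hd Hv.
by exists (mutseq ks seed0), i; split; [exists ks|].
Qed.

Lemma bij_inf d : ~ finitely_many seed0 d -> exists e : nat -> {v | cv_deg seed0 d v}, bijective e.
Proof. move=> H; exact: (enum_bij (cvA d) H). Qed.

Lemma bal_inf d d' : ~ finitely_many seed0 d -> ~ finitely_many seed0 d' ->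
  exists f : {v | cv_deg seed0 d v} -> {v | cv_deg seed0 d' v}, bijective f.
Proof.
move=> /bij_inf [e1 [g1 c1 c1']] /bij_inf [e2 [g2 c2 c2']].
exists (fun x => e2 (g1 x)), (fun y => e1 (g2 y)).
  by move=> x; rewrite c2 c1'.
by move=> y; rewrite c1 c2'.
Qed.

Lemma bal_single d d' v v' : cv_deg seed0 d v -> cv_deg seed0 d' v' ->
  (forall x, cv_deg seed0 d x -> x = v) -> (forall x, cv_deg seed0 d' x -> x = v') ->
  exists f : {v | cv_deg seed0 d v} -> {v | cv_deg seed0 d' v}, bijective f.
Proof.
move=> hv hv' u u'.
exists (fun _ => exist _ v' hv'), (fun _ => exist _ v hv).
  by move=> [x hx]; apply: sig_eqP => /=; rewrite (u x hx).
by move=> [x hx]; apply: sig_eqP => /=; rewrite (u' x hx).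
Qed.

Lemma bal_empty d d' : ~ degree_occurs seed0 d -> ~ degree_occurs seed0 d' ->
  exists f : {v | cv_deg seed0 d v} -> {v | cv_deg seed0 d' v}, bijective f.
Proof.
move=> n n'.
have f : {v | cv_deg seed0 d v} -> {v | cv_deg seed0 d' v}.
  by move=> [v hv]; exfalso; apply: n; exists v.
have g : {v | cv_deg seed0 d' v} -> {v | cv_deg seed0 d v}.
  by move=> [v hv]; exfalso; apply: n'; exists v.
exists f, g.
  by move=> [v hv]; exfalso; apply: n; exists v.
by move=> [v hv]; exfalso; apply: n'; exists v.
Qed.

Lemma cv2 : cv_deg seed0 2 X3.
Proof. by exists seed0, o2; split; [exists [::]|]. Qed.

Lemma uniq2 x : cv_deg seed0 2 x -> x = X3.
Proof. move=> [s [i [Hr [<- Hg]]]]; have [_ h _] := Inv_props _ (Inv_reach _ Hr) i; exact: h. Qed.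

Lemma cvm2 : cv_deg seed0 (-2) W.
Proof.
have H := tr4_1 _ (tr2_0 _ (tr0_2 _ St0_seed0)).
exists (Tq 0), o1; split; first exact: reach_mutseq.
rewrite Tq0; have [_ [Hg [_ [_ HG]]]] := H.
by rewrite Hg HG.
Qed.

Lemma uniqm2 x : cv_deg seed0 (-2) x -> x = W.
Proof. move=> [s [i [Hr [<- Hg]]]]; have [_ _ h] := Inv_props _ (Inv_reach _ Hr) i; exact: h. Qed.

Lemma cv1 : cv_deg seed0 1 (xinit o0).
Proof. by exists seed0, o0; split; [exists [::]|]. Qed.

Lemma cvm1 : cv_deg seed0 (-1) (sx (mutate o2 seed0) o2).
Proof.
have [_ [Hg _]] := tr0_2 _ St0_seed0.
by exists (mutate o2 seed0), o2; split; [exists [:: o2]| rewrite Hg].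
Qed.

Lemma occurs d : degree_occurs seed0 d <-> d \in [:: 1; -1; 2; -2].
Proof.
split.
  move=> [v [s [i [Hr [_ <-]]]]]; by have [h _ _] := Inv_props _ (Inv_reach _ Hr) i.
rewrite !inE => /or4P [/eqP->|/eqP->|/eqP->|/eqP->].
- by exists (xinit o0); exact: cv1.
- by exists (sx (mutate o2 seed0) o2); exact: cvm1.
- by exists X3; exact: cv2.
- by exists W; exact: cvm2.
Qed.

Theorem mainTheorem7 :
  (B0 *m \matrix_(i < 3, j < 1) g0 i == 0) /\
  mixed_type seed0 /\
  (forall d : int, degree_occurs seed0 d <-> d \in [:: 1; -1; 2; -2]) /\
  (exists! v, cv_deg seed0 2 v) /\
  (exists! v, cv_deg seed0 (-2) v) /\
  ~ finitely_many seed0 1 /\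
  ~ finitely_many seed0 (-1) /\
  balanced seed0.
Proof.
split.
  apply/eqP/matrixP => i j; rewrite !mxE.
  under eq_bigr do rewrite !mxE.
  rewrite !big_ord_recl big_ord0.
  by move: i; apply: ord3P.
split.
  split.
    exists 2; split; first by exists X3; exact: cv2.
    by exists [:: X3] => v /uniq2 ->; rewrite mem_seq1.
  exists 1; split; last exact: not_fin1.
  by exists (xinit o0); exact: cv1.
split; first exact: occurs.
split; first by exists X3; split; [exact: cv2 | move=> x /uniq2 ->].
split; first by exists W; split; [exact: cvm2 | move=> x /uniqm2 ->].
split; first exact: not_fin1.
split; first exact: not_finm1.
move=> d.
case: (boolP (d \in [:: 1; -1; 2; -2])) => hd.
  move: hd; rewrite !inE => /or4P [/eqP->|/eqP->|/eqP->|/eqP->].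
  - exact: bal_inf not_fin1 not_finm1.
  - rewrite opprK; exact: bal_inf not_finm1 not_fin1.
  - exact: bal_single cv2 cvm2 uniq2 uniqm2.
  - rewrite opprK; exact: bal_single cvm2 cv2 uniqm2 uniq2.
apply: bal_empty.
  by rewrite occurs; apply/negP.
rewrite occurs; apply/negP; apply: (contra _ hd).
rewrite !inE => /or4P [/eqP E|/eqP E|/eqP E|/eqP E]; rewrite -(opprK d) E //.
Qed.
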